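(* In any generalized-noncontextual ontological model of quantum theory, for each unit vector $\hat n_k\in\mathbb{R}^3$ and $\eta\in[0,1]$, the response function of the $\eta$-sharp spin measurement $\mathcal{M}_k$ given by the qubit POVM $\{E^k_{X_k}=\tfrac12\mathbf{1}+\tfrac{\eta}{2}X_k\vec\sigma\cdot\hat n_k\}_{X_k\in\{+1,-1\}}$ has the form $$p(X_k|\mathcal{M}_k;\lambda)=\eta\,[X_k(\lambda)]+(1-\eta)\big(\tfrac12[+1]+\tfrac12[-1]\big),$$ where $X_k(\lambda)\in\{+1,-1\}$ is the outcome assigned at $\lambda$ to the projective spin measurement along $\hat n_k$, and $[x]$ denotes the deterministic response function assigning probability 1 to outcome $x$.
   Context: An ontological model of quantum theory specifies ontic states $\lambda$, distributions $p(\lambda|P)$ for preparation procedures and response functions $p(X|M;\lambda)$ for measurement procedures reproducing the quantum statistics. It is measurement-noncontextual if operationally equivalent measurement procedures (same POVM) have identical response functions, preparation-noncontextual if operationally equivalent preparation procedures (same density operator) have identical distributions, and generalized-noncontextual if it is both. $\vec\sigma$ denotes the vector of Pauli matrices. *)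

(* Defs.v *)
From HB Require Import structures.
From mathcomp Require Import all_boot all_order all_algebra.
From mathcomp Require Import all_classical all_reals all_analysis.
From mathcomp.real_closed Require Import complex.

Set Implicit Arguments.
Unset Strict Implicit.
Unset Printing Implicit Defensive.

Import Order.TTheory GRing.Theory Num.Theory.
Local Open Scope ring_scope.
Local Open Scope classical_set_scope.
Local Open Scope complex_scope.
Local Open Scope ring_scope.

Section Qubit.
Variable R : realType.
Local Notation C := (R[i]).

Definition adjmx m n (A : 'M[C]_(m, n)) : 'M[C]_(n, m) := \matrix_(i, j) (A j i)^*.

Definition psd (A : 'M[C]_2) : Prop :=
  adjmx A = A /\ forall v : 'cV[C]_2, 0 <= ((adjmx v) *m A *m v) 0 0.

Definition is_density (rho : 'M[C]_2) : Prop := psd rho /\ \tr rho = 1.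
Definition is_effect (E : 'M[C]_2) : Prop := psd E /\ psd (1 - E).

Definition density := {rho : 'M[C]_2 | is_density rho}.
Definition effect := {E : 'M[C]_2 | is_effect E}.
Definition weight := {p : R | 0 <= p <= 1}.

(* Born rule probability tr(rho E) (real part; it is real for psd operators) *)
Definition born (rho E : 'M[C]_2) : R := complex.Re (\tr (rho *m E)).

Definition sigma_x : 'M[C]_2 := \matrix_(i, j) (if i == j then 0 else 1).
Definition sigma_y : 'M[C]_2 :=
  \matrix_(i, j) (if i == j then 0 else if (i : nat) == 0%N then - 'i%C else 'i%C).
Definition sigma_z : 'M[C]_2 :=
  \matrix_(i, j) (if i == j then (if (i : nat) == 0%N then 1 else -1) else 0).

Definition sigma_dot (n : 'rV[R]_3) : 'M[C]_2 :=
  (n 0 0)%:C *: sigma_x + (n 0 1)%:C *: sigma_y + (n 0 2%:R)%:C *: sigma_z.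

Definition unit_vector (n : 'rV[R]_3) : Prop := \sum_(i < 3) n 0 i ^+ 2 = 1.

(* Outcome +1 is encoded by [true], outcome -1 by [false]. *)
Definition outcome_sign (x : bool) : R := if x then 1 else -1.

Definition eta_spin_effect (eta : R) (n : 'rV[R]_3) (x : bool) : 'M[C]_2 :=
  (2^-1)%:C *: 1 + (eta / 2 * outcome_sign x)%:C *: sigma_dot n.

(* Operational theory of (binary-outcome) qubit quantum theory: procedures
   generated from primitive procedures (any density operator / any binary
   POVM {E, 1-E}, each with arbitrarily many distinct implementations
   labelled by a tag) by convex mixing, and for measurements also by
   deterministic relabelling (classical post-processing) of outcomes. *)
Inductive prep :=
  | PBasic of density & nat
  | PMix of weight & prep & prep.

Inductive meas :=
  | MBasic of effect & nat
  | MMix of weight & meas & meas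
  | MRelabel of (bool -> bool) & meas.

Fixpoint dens (P : prep) : 'M[C]_2 :=
  match P with
  | PBasic rho _ => sval rho
  | PMix p P1 P2 => (sval p)%:C *: dens P1 + (1 - sval p)%:C *: dens P2
  end.

Fixpoint povm (M : meas) (x : bool) : 'M[C]_2 :=
  match M with
  | MBasic E _ => if x then sval E else 1 - sval E
  | MMix p M1 M2 => (sval p)%:C *: povm M1 x + (1 - sval p)%:C *: povm M2 x
  | MRelabel f M1 => \sum_(y : bool | f y == x) povm M1 y
  end.

Record ontological_model := OntModel {
  ont_disp : measure_display;
  ontic : measurableType ont_disp;
  mu : prep -> probability ontic R;
  xi : meas -> bool -> ontic -> R;
  xi_measurable : forall M x, measurable_fun setT (xi M x);
  xi_ge0 : forall M x l, 0 <= xi M x l;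
  xi_sum1 : forall M l, xi M true l + xi M false l = 1;
  mu_mix : forall p P1 P2 A, measurable A ->
    mu (PMix p P1 P2) A = ((sval p)%:E * mu P1 A + (1 - sval p)%:E * mu P2 A)%E;
  xi_mix : forall p M1 M2 x l,
    xi (MMix p M1 M2) x l = sval p * xi M1 x l + (1 - sval p) * xi M2 x l;
  xi_relabel : forall f M x l,
    xi (MRelabel f M) x l = \sum_(y : bool | f y == x) xi M y l;
  reproduces : forall P M x,
    (\int[mu P]_l (xi M x l)%:E)%E = (born (dens P) (povm M x))%:E
}.


Definition meas_noncontextual (m : ontological_model) : Prop :=
  forall M M', (forall x, povm M x = povm M' x) -> @xi m M = @xi m M'.

Definition prep_noncontextual (m : ontological_model) : Prop :=
  forall P P', dens P = dens P' -> @mu m P = @mu m P'.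

Definition generalized_noncontextual (m : ontological_model) : Prop :=
  meas_noncontextual m /\ prep_noncontextual m.

Definition det_resp (x : bool) (y : bool) : R := if y == x then 1 else 0.

End Qubit.

Arguments xi {R} o M x l.
Arguments mu {R} o P.
Arguments det_resp {R} x y.

(* Main.v *)
Require Import Defs.
From HB Require Import structures.
From mathcomp Require Import all_boot all_order all_algebra.
From mathcomp Require Import all_classical all_reals all_analysis.
From mathcomp.real_closed Require Import complex.
From mathcomp Require Import ring lra measurable_realfun.
Set Implicit Arguments.
Unset Strict Implicit.
Unset Printing Implicit Defensive.
Import Order.TTheory GRing.Theory Num.Theory.
Local Open Scope ring_scope.
Local Open Scope classical_set_scope.
Local Open Scope complex_scope.

Section S.
Variable R : realType.
Local Notation C := (R[i]).
Local Notation Re := (@complex.Re R).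
Local Notation Im := (@complex.Im R).
Lemma ReD (x y : C) : Re (x + y) = Re x + Re y. Proof. by case: x; case: y. Qed.
Lemma ImD (x y : C) : Im (x + y) = Im x + Im y. Proof. case: x => a b; case: y => c d. simpl. done. Qed.
Lemma ReN (x : C) : Re (- x) = - Re x. Proof. by case: x. Qed.
Lemma ImN (x : C) : Im (- x) = - Im x. Proof. by case: x. Qed.
Lemma ReM (x y : C) : Re (x * y) = Re x * Re y - Im x * Im y. Proof. case: x => a b; case: y => c d. simpl. done. Qed.
Lemma ImM (x y : C) : Im (x * y) = Re x * Im y + Im x * Re y. Proof. by case: x => a b; case: y => c d /=; ring. Qed.
Lemma ReJ (x : C) : Re (x^*) = Re x. Proof. by case: x. Qed.
Lemma ImJ (x : C) : Im (x^*) = - Im x. Proof. by case: x. Qed.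
Lemma ReC (r : R) : Re (r%:C) = r. Proof. by []. Qed.
Lemma ImC (r : R) : Im (r%:C) = 0. Proof. by []. Qed.
Lemma Re0 : Re (0 : C) = 0. Proof. by []. Qed.
Lemma Im0 : Im (0 : C) = 0. Proof. by []. Qed.
Lemma Re1 : Re (1 : C) = 1. Proof. by []. Qed.
Lemma Im1 : Im (1 : C) = 0. Proof. by []. Qed.
Lemma Rei : Re ('i : C) = 0. Proof. by []. Qed.
Lemma Imi : Im ('i : C) = 1. Proof. by []. Qed.
Lemma ReB (x y : C) : Re (x - y) = Re x - Re y. Proof. by rewrite ReD ReN. Qed.
Lemma ImB (x y : C) : Im (x - y) = Im x - Im y. Proof. by rewrite ImD ImN. Qed.
Lemma cE (x y : C) : Re x = Re y -> Im x = Im y -> x = y.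
Proof. by case: x; case: y => /= ? ? ? ? -> ->. Qed.
Lemma cle0 (x : C) : 0 <= x <-> Im x = 0 /\ 0 <= Re x.
Proof. case: x => a b; rewrite lecE /=; split; [by case/andP => /eqP -> | by case=> -> ->; rewrite eqxx]. Qed.

Lemma conjE (x : C) : (x^*)%R = (x^*)%C. Proof. reflexivity. Qed.

Lemma ord2 (i : 'I_2) : i = 0 \/ i = 1.
Proof. case: i => [[|[|k]] Hi]; [left|right|by []]; exact: val_inj. Qed.

Lemma sum2 (F : 'I_2 -> C) : \sum_(i < 2) F i = F 0 + F 1.
Proof. rewrite big_ord_recl big_ord1; congr (_ + F _); exact: val_inj. Qed.

Lemma psd2 (A : 'M[C]_2) (a d b1 b2 : R) :
  A 0 0 = a%:C -> A 1 1 = d%:C -> A 0 1 = b1 +i* b2 -> A 1 0 = b1 -i* b2 ->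
  0 <= a -> 0 <= d -> a + d = 1 -> b1^+2 + b2^+2 <= a*d -> psd A.
Proof.
move=> h00 h11 h01 h10 a0 d0 ad1 bad; split.
  apply/matrixP => i j; rewrite mxE.
  case: (ord2 i) => ->; case: (ord2 j) => ->;
    rewrite ?h00 ?h11 ?h01 ?h10 conjE /= ?oppr0 ?opprK //.
move=> v; rewrite !mxE !sum2 !mxE !sum2 !mxE h00 h11 h01 h10.
move: (v 0 0) (v 1 0) => [x1 x2] [y1 y2].
apply/cle0; rewrite !(ReD, ImD, ReM, ImM, ReJ, ImJ, ReC, ImC) /=; split; first by ring.
set Q := (X in 0 <= X).
have -> : Q = Q * (a + d) by rewrite ad1 mulr1.
have -> : Q * (a + d) = (a*x1 + b1*y1 - b2*y2)^+2 + (a*x2 + b1*y2 + b2*y1)^+2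
   + (a*d - b1^+2 - b2^+2) * (y1^+2 + y2^+2)
   + (d*y1 + b1*x1 + b2*x2)^+2 + (d*y2 + b1*x2 - b2*x1)^+2
   + (a*d - b1^+2 - b2^+2) * (x1^+2 + x2^+2) by rewrite /Q; ring.
have h : 0 <= a*d - b1^+2 - b2^+2 by lra.
by repeat apply: addr_ge0; rewrite ?sqr_ge0 //; apply: mulr_ge0 => //; apply: addr_ge0; exact: sqr_ge0.
Qed.

Lemma quadform (A : 'M[C]_2) (v : 'cV[C]_2) :
  (adjmx v *m A *m v) 0 0 =
  (v 0 0)^* * (A 0 0 * v 0 0 + A 0 1 * v 1 0) + (v 1 0)^* * (A 1 0 * v 0 0 + A 1 1 * v 1 0).
Proof.
rewrite !mxE !sum2 !mxE !sum2 !mxE !conjE.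
apply: cE; rewrite !(ReD, ImD, ReM, ImM, ReJ, ImJ) /=; ring.
Qed.

Definition good (rho : 'M[C]_2) :=
  exists a d b1 b2, [/\ rho 0 0 = a%:C, rho 1 1 = d%:C, rho 0 1 = b1 +i* b2,
   rho 1 0 = b1 -i* b2 & [/\ 0 <= a, 0 <= d, a + d = 1 & b1^+2 + b2^+2 <= 1]].

Lemma density_entries (rho : 'M[C]_2) : is_density rho -> good rho.
Proof.
move=> [[herm pos] tr1].
have hE i j : (rho j i)^*%C = rho i j.
  by rewrite -conjE -[in RHS]herm mxE.
have h00 := hE 0 0; have h11 := hE 1 1; have h10 := hE 0 1.
move: h00 h11 h10.
case E00: (rho 0 0) => [a a'] /=.
case E11: (rho 1 1) => [d d'] /=.
case E01: (rho 0 1) => [b1 b2] /=.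
move=> [ha'] [hd'] h10.
have a'0 : a' = 0 by lra.
have d'0 : d' = 0 by lra.
have tr : a + d = 1.
  move: tr1; rewrite /mxtrace sum2 E00 E11 => /(congr1 (@complex.Re R)) /=.
  by [].
have h10' : rho 1 0 = b1 -i* b2 by rewrite -[rho 1 0]conjcK h10.
have pos0 := pos (\col_i (if (i : nat) == 0%N then 1 else 0)).
have pos1 := pos (\col_i (if (i : nat) == 0%N then 0 else 1)).
have pos2 := pos (\col_i (if (i : nat) == 0%N then 1 else - (b1 -i* b2))).
rewrite quadform !mxE /= E00 E11 E01 h10' in pos0.
rewrite quadform !mxE /= E00 E11 E01 h10' in pos1.
rewrite quadform !mxE /= E00 E11 E01 h10' in pos2.
move: pos0 pos1 pos2 => /cle0 [_] p0 /cle0 [_] p1 /cle0 [_] p2.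
rewrite !(ReD, ImD, ReM, ImM, ReJ, ImJ, ReN, ImN) /= in p0 p1 p2.
rewrite a'0 d'0 in p0 p1 p2.
rewrite /good; exists a, d, b1, b2; split; rewrite ?E00 ?E11 ?E01 ?h10' ?a'0 ?d'0 //.
split => //; try lra.
nra.
Qed.


Ltac cring := apply: cE; rewrite ?(ReD, ImD, ReM, ImM, ReJ, ImJ, ReN, ImN, ReB, ImB) /=.

Lemma spin_entries (eta : R) (n : 'rV[R]_3) (x : bool) :
  let c := eta / 2 * @outcome_sign R x in
  let E := eta_spin_effect eta n x in
  [/\ E 0 0 = (2^-1 + c * n 0 2%:R)%:C, E 1 1 = (2^-1 - c * n 0 2%:R)%:C,
      E 0 1 = (c * n 0 0) +i* (- (c * n 0 1)) & E 1 0 = (c * n 0 0) -i* (- (c * n 0 1))].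
Proof.
move=> c E; rewrite /E /eta_spin_effect /sigma_dot /sigma_x /sigma_y /sigma_z -/c.
split; rewrite !mxE /=; cring; ring.
Qed.


Lemma unit3 (n : 'rV[R]_3) : unit_vector n ->
  n 0 0 ^+ 2 + n 0 1 ^+ 2 + n 0 2%:R ^+ 2 = 1.
Proof.
rewrite /unit_vector !big_ord_recr big_ord0 /= add0r => <-.
by congr (n 0 _ ^+ 2 + n 0 _ ^+ 2 + n 0 _ ^+ 2); apply: val_inj.
Qed.

Lemma sign2 x : @outcome_sign R x ^+ 2 = 1.
Proof. by case: x; rewrite /outcome_sign ?expr1n ?sqrrN ?expr1n. Qed.

Lemma proj_density (n : 'rV[R]_3) x : unit_vector n -> is_density (eta_spin_effect 1 n x).
Proof.
move=> /unit3 hn.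
have [h00 h11 h01 h10] := spin_entries 1 n x.
have s2 := sign2 x.
set s := @outcome_sign R x in h00 h11 h01 h10 s2.
have hs : s = 1 \/ s = -1 by rewrite /s; case: (x); [left|right].
split.
  apply: (psd2 h00 h11 h01 h10).
  - case: hs => ->; nra.
  - case: hs => ->; nra.
  - lra.
  - case: hs => ->; nra.
rewrite /mxtrace sum2 h00 h11; cring; lra.
Qed.

Definition halfI : 'M[C]_2 := (2^-1)%:C *: 1.

Lemma mx2_ext (A B : 'M[C]_2) :
  A 0 0 = B 0 0 -> A 0 1 = B 0 1 -> A 1 0 = B 1 0 -> A 1 1 = B 1 1 -> A = B.
Proof.
move=> h1 h2 h3 h4; apply/matrixP => i j.
by case: (ord2 i) => ->; case: (ord2 j) => ->.
Qed.

Lemma halfI_entries : [/\ halfI 0 0 = (2^-1)%:C, halfI 1 1 = (2^-1)%:C,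
   halfI 0 1 = 0 +i* 0 & halfI 1 0 = 0 -i* 0].
Proof. by split; rewrite !mxE /=; cring; ring. Qed.

Lemma oneB_halfI : 1 - halfI = halfI.
Proof.
apply/matrixP => i j; case: (ord2 i) => ->; case: (ord2 j) => ->;
  rewrite !mxE /=; cring; lra.
Qed.

Lemma halfI_effect : is_effect halfI.
Proof.
have [h00 h11 h01 h10] := halfI_entries.
split; first by apply: (psd2 h00 h11 h01 h10); lra.
apply: (@psd2 _ (2^-1) (2^-1) 0 0); rewrite ?mxE ?h00 ?h11 ?h01 ?h10 /=; try (cring; lra); lra.
Qed.

Definition compl (rho : 'M[C]_2) : 'M[C]_2 := (2/3)%:C *: 1 - (3^-1)%:C *: rho.

Lemma compl_density rho : good rho -> is_density (compl rho).
Proof.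
move=> [a [d [b1 [b2 [h00 h11 h01 h10 [a0 d0 ad bb]]]]]].
split.
  apply: (@psd2 _ ((2 - a)/3) ((2 - d)/3) (-(b1/3)) (-(b2/3)));
    rewrite ?mxE ?h00 ?h11 ?h01 ?h10 /=; try (cring; lra); try lra.
  nra.
rewrite /mxtrace sum2 !mxE h00 h11 /=; cring; lra.
Qed.


Lemma good_dens (P : prep R) : good (dens P).
Proof.
elim: P => [rho k|[p hp] P1 [a [d [b1 [b2 [h00 h11 h01 h10 [a0 d0 ad bb]]]]]]
   P2 [a' [d' [c1 [c2 [g00 g11 g01 g10 [a0' d0' ad' cc]]]]]]] /=.
  exact: density_entries (svalP rho).
have [p0 p1] : 0 <= p /\ p <= 1 by case/andP: hp.
exists (p * a + (1 - p) * a'), (p * d + (1 - p) * d'),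
  (p * b1 + (1 - p) * c1), (p * b2 + (1 - p) * c2).
split; rewrite ?mxE ?h00 ?h11 ?h01 ?h10 ?g00 ?g11 ?g01 ?g10; try (cring; ring).
split; try nra.
have hq : 0 <= p * (1 - p) by nra.
have hs : 0 <= (b1 - c1)^+2 + (b2 - c2)^+2 by apply: addr_ge0; apply: sqr_ge0.
have := mulr_ge0 hq hs.
nra.
Qed.

End S.

Ltac cring := apply: cE; rewrite ?(ReD, ImD, ReM, ImM, ReJ, ImJ, ReN, ImN, ReB, ImB) /=.

Lemma lincomb_entry (R : realType) (a b : R[i]) (A B : 'M[R[i]]_2) i j :
  (a *: A + b *: B) i j = a * A i j + b * B i j.
Proof. by rewrite !mxE. Qed.
Lemma mix_spin (R : realType) (eta : R) (n : 'rV[R]_3) x : eta_spin_effect eta n x =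
  eta%:C *: eta_spin_effect 1 n x + (1 - eta)%:C *: halfI R.
Proof.
have [h00 h11 h01 h10] := spin_entries eta n x.
have [g00 g11 g01 g10] := spin_entries 1 n x.
have [k00 k11 k01 k10] := halfI_entries R.
move: h00 h11 h01 h10 g00 g11 g01 g10 k00 k11 k01 k10.
move: (eta_spin_effect eta n x) (eta_spin_effect 1 n x) (halfI R) => E F H.
move=> h00 h11 h01 h10 g00 g11 g01 g10 k00 k11 k01 k10.
apply: mx2_ext; rewrite lincomb_entry ?h00 ?h11 ?h01 ?h10 ?g00 ?g11 ?g01 ?g10 ?k00 ?k11 ?k01 ?k10;
  cring; ring.
Qed.

Lemma born_orth (R : realType) (n : 'rV[R]_3) x : unit_vector n ->
  born (eta_spin_effect 1 n x) (eta_spin_effect 1 n (~~ x)) = 0.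
Proof.
move=> /unit3 hn.
suff : forall s, s = outcome_sign R x -> born (eta_spin_effect 1 n x) (eta_spin_effect 1 n (~~ x)) = 0 by apply.
move=> s hs.
have hsx y : outcome_sign R (~~ y) = - outcome_sign R y.
  by case: y; rewrite /outcome_sign /= ?opprK.
have hs' : outcome_sign R (~~ x) = - s by rewrite hs hsx.
have hs2 : s ^+ 2 = 1 by rewrite hs sign2.
have [h00 h11 h01 h10] := spin_entries 1 n x.
have [g00 g11 g01 g10] := spin_entries 1 n (~~ x).
move: h00 h11 h01 h10 g00 g11 g01 g10.
move: (eta_spin_effect 1 n x) (eta_spin_effect 1 n (~~ x)) => E F.
move=> h00 h11 h01 h10 g00 g11 g01 g10.
rewrite /born /mxtrace sum2 !mxE !sum2 h00 h11 h01 h10 g00 g11 g01 g10.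
rewrite !(ReD, ImD, ReM, ImM, ReJ, ImJ, ReN, ImN, ReB, ImB) /= -hs hs'.
nra.
Qed.

Lemma half_mix (R : realType) (n : 'rV[R]_3) :
  (2^-1 : R)%:C *: eta_spin_effect 1 n true + (1 - 2^-1)%:C *: eta_spin_effect 1 n false
  = halfI R.
Proof.
have [h00 h11 h01 h10] := spin_entries 1 n true.
have [g00 g11 g01 g10] := spin_entries 1 n false.
have [k00 k11 k01 k10] := halfI_entries R.
move: h00 h11 h01 h10 g00 g11 g01 g10 k00 k11 k01 k10.
move: (eta_spin_effect 1 n true) (eta_spin_effect 1 n false) (halfI R) => E F H.
move=> h00 h11 h01 h10 g00 g11 g01 g10 k00 k11 k01 k10.
apply: mx2_ext; rewrite lincomb_entry ?h00 ?h11 ?h01 ?h10 ?g00 ?g11 ?g01 ?g10 ?k00 ?k11 ?k01 ?k10;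
  cring; rewrite /outcome_sign /=; lra.
Qed.

Lemma quarter_mix (R : realType) (rho : 'M[R[i]]_2) :
  (4^-1 : R)%:C *: rho + (1 - 4^-1)%:C *: compl rho = halfI R.
Proof.
have [k00 k11 k01 k10] := halfI_entries R.
have ce i j : compl rho i j = (2/3)%:C * (i == j)%:R - (3^-1)%:C * rho i j.
  by rewrite !mxE.
move: k00 k11 k01 k10; move: (halfI R) => H k00 k11 k01 k10.
apply: mx2_ext; rewrite lincomb_entry ce ?k00 ?k11 ?k01 ?k10 /=; cring; lra.
Qed.

Unset Implicit Arguments.
Local Close Scope complex_scope.

Theorem lemma2 (R : realType) (m : ontological_model R)
  (hNC : generalized_noncontextual m)
  (n : 'rV[R]_3) (hn : unit_vector n) (eta : R) (heta : 0 <= eta <= 1)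
  (Mk : meas R) (hMk : forall x, povm Mk x = eta_spin_effect eta n x)
  (Mproj : meas R) (hMproj : forall x, povm Mproj x = eta_spin_effect 1 n x) :
  exists X : ontic m -> bool,
    forall P : prep R,
      {ae mu m P, forall l,
         (forall x, xi m Mproj x l = det_resp (X l) x) /\
         (forall x, xi m Mk x l =
            eta * det_resp (X l) x
            + (1 - eta) * (2^-1 * det_resp true x + 2^-1 * det_resp false x))}.
Proof.
case: hNC => mNC pNC.
have w12 : 0 <= (2^-1 : R) <= 1 by apply/andP; split; lra.
pose half_eff : effect R := exist _ (halfI R) (@halfI_effect R).
pose T := MBasic half_eff 0.
have povmT x : povm T x = halfI R.
  by case: x => //=; rewrite oneB_halfI.
have xiT x l : xi m T x l = 2^-1.
  have hR : xi m (MRelabel negb T) = xi m T.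
    apply: mNC => y; rewrite /= big_mkcond big_bool /=.
    by case: y; rewrite /= ?oneB_halfI ?addr0 ?add0r.
  have := congr1 (fun f => f true l) hR.
  rewrite xi_relabel big_mkcond big_bool /= add0r => h.
  have := @xi_sum1 R m T l.
  by case: x; lra.
pose we : weight R := exist _ eta heta.
have hMix : xi m Mk = xi m (MMix we Mproj T).
  apply: mNC => x; rewrite hMk mix_spin.
  change (povm (MMix we Mproj T) x) with ((eta%:C)%C *: povm Mproj x + ((1 - eta)%:C)%C *: povm T x).
  by rewrite hMproj povmT.
have xiMk x l : xi m Mk x l = eta * xi m Mproj x l + (1 - eta) * 2^-1.
  by rewrite hMix xi_mix xiT.
have key l : xi m Mproj true l = 0 \/ xi m Mproj false l = 0 ->
   (forall x, xi m Mproj x l = det_resp (xi m Mproj true l != 0) x) /\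
   (forall x, xi m Mk x l = eta * det_resp (xi m Mproj true l != 0) x
            + (1 - eta) * (2^-1 * det_resp true x + 2^-1 * det_resp false x)).
  have s1 := @xi_sum1 R m Mproj l.
  case => h0.
    have h1 : xi m Mproj false l = 1 by lra.
    rewrite h0 eqxx /=; split => x; rewrite ?xiMk /det_resp;
      case: x; rewrite ?h0 ?h1 /=; lra.
  have h1 : xi m Mproj true l = 1 by lra.
  have h1' : (xi m Mproj true l != 0) = true by rewrite h1 oner_eq0.
  rewrite h1' /=; split => x; rewrite ?xiMk /det_resp;
    case: x; rewrite ?h0 ?h1 /=; lra.
pose rP x : density R := exist _ (eta_spin_effect 1 n x) (proj_density x hn).
pose wh : weight R := exist _ (2^-1) w12.
pose P0 := PMix wh (PBasic (rP true) 0%N) (PBasic (rP false) 0%N).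
have null x : exists N, [/\ measurable N, mu m (PBasic (rP x) 0%N) N = 0 &
     forall l, xi m Mproj (~~ x) l != 0 -> N l].
  have mf : measurable_fun setT (EFin \o xi m Mproj (~~ x)).
    exact/measurable_EFinP/xi_measurable.
  have mf2 : measurable_fun setT (fun l => (xi m Mproj (~~ x) l)%:E) by exact: mf.
  have hint : (\int[mu m (PBasic (rP x) 0%N)]_l `|(xi m Mproj (~~ x) l)%:E|)%E = 0.
    have -> : (fun l => `|(xi m Mproj (~~ x) l)%:E|%E) = (fun l => (xi m Mproj (~~ x) l)%:E).
      by apply: funext => l; rewrite gee0_abs // lee_fin xi_ge0.
    by rewrite reproduces /= hMproj born_orth.
  have [N [mN muN sub]] := (ae_eq_integral_abs _ measurableT mf).1 hint.
  exists N; split => // l hl; apply: sub => /= h.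
  by move: (h I) => [] /eqP; apply/negP.
have [N1 [mN1 mu1 s1]] := null true.
have [N2 [mN2 mu2 s2]] := null false.
pose B := N1 `&` N2.
have mB : measurable B by apply: measurableI.
have muP0 : mu m P0 B = 0.
  rewrite mu_mix //=.
  rewrite (subset_measure0 mB mN1 (@subIsetl _ _ _) mu1).
  rewrite (subset_measure0 mB mN2 (@subIsetr _ _ _) mu2).
  by rewrite !mule0 adde0.
have densP0 : dens P0 = halfI R by rewrite /= half_mix.
exists (fun l => xi m Mproj true l != 0) => P.
have w14 : 0 <= (4^-1 : R) <= 1 by apply/andP; split; lra.
pose rc : density R := exist _ (compl (dens P)) (compl_density (good_dens P)).
pose Q := PMix (exist _ (4^-1) w14) P (PBasic rc 0%N).
have densQ : dens Q = halfI R by rewrite /= quarter_mix.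
have muQ : mu m Q = mu m P0 by apply: pNC; rewrite densQ densP0.
have muPB : mu m P B = 0.
  have := muP0; rewrite -muQ mu_mix //= => /eqP.
  have g1 : (0 <= (4^-1 : R)%:E * mu m P B)%E.
    by apply: mule_ge0; [rewrite lee_fin; lra | exact: measure_ge0].
  have g2 : (0 <= (1 - 4^-1 : R)%:E * mu m (PBasic rc 0%N) B)%E.
    by apply: mule_ge0; [rewrite lee_fin; lra | exact: measure_ge0].
  rewrite padde_eq0 // => /andP [].
  rewrite mule_eq0 eqe => /orP [/eqP h _|/eqP -> _ //].
  exfalso; lra.
exists B; split => // l /= ng.
split.
  apply: contrapT => h; apply: ng; apply: key; right.
  by apply/eqP; apply: contrapT => h'; apply: h; apply: s1; apply/negP.
apply: contrapT => h; apply: ng; apply: key; left.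
by apply/eqP; apply: contrapT => h'; apply: h; apply: s2; apply/negP.
Qed.
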